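(* Let $\mathfrak{H}=(H,\wedge,\vee,\to,\bot,\top,\Box)$ be a $\mathsf{K4}^{\mathrm{i}}$-algebra. Then $\mathfrak{H}$ is a $\mathsf{GL}^{\mathrm{i}}$-algebra if and only if every $\mathfrak{H}$-polynomial $t(p)$ in one variable $p$ in which $p$ is $\Box$-guarded has a fixed point, i.e. there is $\mathsf{h}\in H$ with $t(\mathsf{h})=\mathsf{h}$.
   Context: A $\mathsf{K4}^{\mathrm{i}}$-algebra is a Heyting algebra $(H,\wedge,\vee,\to,\bot,\top)$ with a unary operation $\Box$ that preserves $\top$ and finite meets (i.e. $\Box\top=\top$ and $\Box(a\wedge b)=\Box a\wedge\Box b$) and satisfies $\Box a\le\Box\Box a$ for all $a$. A $\mathsf{GL}^{\mathrm{i}}$-algebra is a $\mathsf{K4}^{\mathrm{i}}$-algebra additionally satisfying $\Box(\Box a\to a)=\Box a$ for all $a$. An $\mathfrak{H}$-polynomial is a term in the signature $\wedge,\vee,\to,\bot,\top,\Box$ enriched with a constant for each element of $H$; a variable $p$ is $\Box$-guarded in a polynomial if every occurrence of $p$ lies within the scope of some $\Box$. *)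

(* Defs.v *)
(* A Heyting algebra, presented as a bounded lattice (equational axioms)
   with a relative pseudo-complement [imp]; the order is a <= b := a /\ b = a. *)
Record HeytingAlgebra := {
  carrier :> Type;
  meet : carrier -> carrier -> carrier;
  join : carrier -> carrier -> carrier;
  imp  : carrier -> carrier -> carrier;
  bot  : carrier;
  top  : carrier;
  meetA : forall a b c, meet a (meet b c) = meet (meet a b) c;
  meetC : forall a b, meet a b = meet b a;
  joinA : forall a b c, join a (join b c) = join (join a b) c;
  joinC : forall a b, join a b = join b a;
  meet_absorb : forall a b, meet a (join a b) = a;
  join_absorb : forall a b, join a (meet a b) = a;
  bot_least : forall a, meet bot a = bot;
  top_greatest : forall a, meet a top = a;
  residuation : forall a b c,
    meet (meet c a) b = meet c a <-> meet c (imp a b) = c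
}.

Definition hle (H : HeytingAlgebra) (a b : H) : Prop := meet H a b = a.

Record K4iAlgebra := {
  halg :> HeytingAlgebra;
  box : halg -> halg;
  box_top : box (top halg) = top halg;
  box_meet : forall a b, box (meet halg a b) = meet halg (box a) (box b);
  box_4 : forall a, hle halg (box a) (box (box a))
}.

Definition is_GLi (A : K4iAlgebra) : Prop :=
  forall a : A, box A (imp A (box A a) a) = box A a.

Inductive hpoly (H : Type) : Type :=
| PVar : hpoly H
| PConst : H -> hpoly H
| PBot : hpoly H
| PTop : hpoly H
| PMeet : hpoly H -> hpoly H -> hpoly H
| PJoin : hpoly H -> hpoly H -> hpoly H
| PImp : hpoly H -> hpoly H -> hpoly H
| PBox : hpoly H -> hpoly H.

Arguments PVar {H}.
Arguments PBot {H}.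
Arguments PTop {H}.
Arguments PConst {H} _.
Arguments PMeet {H} _ _.
Arguments PJoin {H} _ _.
Arguments PImp {H} _ _.
Arguments PBox {H} _.

Fixpoint peval (A : K4iAlgebra) (t : hpoly A) (h : A) : A :=
  match t with
  | PVar => h
  | PConst c => c
  | PBot => bot A
  | PTop => top A
  | PMeet t1 t2 => meet A (peval A t1 h) (peval A t2 h)
  | PJoin t1 t2 => join A (peval A t1 h) (peval A t2 h)
  | PImp t1 t2 => imp A (peval A t1 h) (peval A t2 h)
  | PBox t1 => box A (peval A t1 h)
  end.

Fixpoint guarded {H : Type} (t : hpoly H) : Prop :=
  match t with
  | PVar => False
  | PConst _ | PBot | PTop => True
  | PMeet t1 t2 | PJoin t1 t2 | PImp t1 t2 => guarded t1 /\ guarded t2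
  | PBox _ => True
  end.

(* Main.v *)
Require Import Defs.
From Stdlib Require Import Lia Bool.

Section HA.
Context {H : HeytingAlgebra}.
Implicit Types a b c x y : H.

Lemma le_refl a : hle H a a.
Proof. unfold hle. transitivity (meet H a (join H a (meet H a a))).
  rewrite join_absorb; reflexivity. apply meet_absorb. Qed.

Lemma le_trans a b c : hle H a b -> hle H b c -> hle H a c.
Proof. unfold hle; intros h1 h2. rewrite <- h1, <- meetA, h2. reflexivity. Qed.

Lemma le_antisym a b : hle H a b -> hle H b a -> a = b.
Proof. unfold hle; intros h1 h2. transitivity (meet H a b); [symmetry; exact h1|rewrite meetC; exact h2]. Qed.

Lemma le_meet_l a b : hle H (meet H a b) a.
Proof. unfold hle. rewrite <- meetA, (meetC H b a), meetA, (le_refl a). reflexivity. Qed.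

Lemma le_meet_r a b : hle H (meet H a b) b.
Proof. unfold hle. rewrite <- meetA, (le_refl b). reflexivity. Qed.

Lemma le_glb c a b : hle H c a -> hle H c b -> hle H c (meet H a b).
Proof. unfold hle; intros h1 h2. rewrite meetA, h1, h2. reflexivity. Qed.

Lemma le_top a : hle H a (top H).
Proof. apply top_greatest. Qed.

Lemma le_join_l a b : hle H a (join H a b).
Proof. apply meet_absorb. Qed.

Lemma le_join_r a b : hle H b (join H a b).
Proof. unfold hle. rewrite joinC. apply meet_absorb. Qed.

Lemma le_join_eq a c : hle H a c -> join H a c = c.
Proof. unfold hle; intro h. rewrite <- h, joinC, meetC. apply join_absorb. Qed.

Lemma le_lub a b c : hle H a c -> hle H b c -> hle H (join H a b) c.
Proof. intros h1 h2. unfold hle.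
  assert (Heq : join H (join H a b) c = c).
  { rewrite <- joinA, (le_join_eq _ _ h2), (le_join_eq _ _ h1). reflexivity. }
  transitivity (meet H (join H a b) (join H (join H a b) c));
  [rewrite Heq; reflexivity | apply meet_absorb]. Qed.

Lemma res1 c a b : hle H (meet H c a) b -> hle H c (imp H a b).
Proof. apply residuation. Qed.
Lemma res2 c a b : hle H c (imp H a b) -> hle H (meet H c a) b.
Proof. apply residuation. Qed.

Lemma mp a b : hle H (meet H a (imp H a b)) b.
Proof. rewrite meetC. apply res2, le_refl. Qed.

Definition biimp x y := meet H (imp H x y) (imp H y x).
Definition E e x y := hle H (meet H e x) y /\ hle H (meet H e y) x.

Lemma E_biimp e x y : E e x y <-> hle H e (biimp x y).
Proof. split.
 - intros [h1 h2]. apply le_glb; apply res1; assumption.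
 - intro h. split; apply res2; eapply le_trans; [exact h| |exact h|].
   apply le_meet_l. apply le_meet_r. Qed.

Lemma E_refl e x : E e x x.
Proof. split; apply le_meet_r. Qed.

Lemma E_sym e x y : E e x y -> E e y x.
Proof. intros [h1 h2]; split; assumption. Qed.

Lemma le_meet_mono c a a' : hle H a a' -> hle H (meet H c a) (meet H c a').
Proof. intro h. apply le_glb. apply le_meet_l. eapply le_trans. apply le_meet_r. exact h. Qed.

Lemma le_meet_mono_l c a a' : hle H a a' -> hle H (meet H a c) (meet H a' c).
Proof. intro h. apply le_glb. eapply le_trans. apply le_meet_l. exact h. apply le_meet_r. Qed.

Lemma E_meet e x x' y y' : E e x x' -> E e y y' -> E e (meet H x y) (meet H x' y').
Proof. intros [h1 h2] [h3 h4]; split; apply le_glb.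
 - eapply le_trans; [|exact h1]. apply le_meet_mono, le_meet_l.
 - eapply le_trans; [|exact h3]. apply le_meet_mono, le_meet_r.
 - eapply le_trans; [|exact h2]. apply le_meet_mono, le_meet_l.
 - eapply le_trans; [|exact h4]. apply le_meet_mono, le_meet_r.
Qed.

Lemma E_join1 e x x' y y' : hle H (meet H e x) x' -> hle H (meet H e y) y' ->
  hle H (meet H e (join H x y)) (join H x' y').
Proof. intros h1 h2. rewrite meetC. apply res2. apply le_lub; apply res1; rewrite meetC.
 - eapply le_trans; [exact h1| apply le_join_l].
 - eapply le_trans; [exact h2| apply le_join_r]. Qed.

Lemma E_join e x x' y y' : E e x x' -> E e y y' -> E e (join H x y) (join H x' y').
Proof. intros [h1 h2] [h3 h4]; split; apply E_join1; assumption. Qed.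

Lemma E_imp1 e x x' y y' : hle H (meet H e x') x -> hle H (meet H e y) y' ->
  hle H (meet H e (imp H x y)) (imp H x' y').
Proof. intros h1 h2. apply res1. eapply le_trans; [|exact h2]. apply le_glb.
 - eapply le_trans; apply le_meet_l.
 - eapply le_trans; [|apply (mp x y)]. apply le_glb.
   + eapply le_trans; [|exact h1]. apply le_glb. eapply le_trans; apply le_meet_l. apply le_meet_r.
   + eapply le_trans. apply le_meet_l. apply le_meet_r.
Qed.

Lemma E_imp e x x' y y' : E e x x' -> E e y y' -> E e (imp H x y) (imp H x' y').
Proof. intros [h1 h2] [h3 h4]; split; apply E_imp1; assumption. Qed.

Lemma E_weak e e' x y : hle H e' e -> E e x y -> E e' x y.
Proof. intros h [h1 h2]; split; (eapply le_trans; [|eassumption]); apply le_glb;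
  [eapply le_trans; [apply le_meet_l|exact h] | apply le_meet_r
  |eapply le_trans; [apply le_meet_l|exact h] | apply le_meet_r]. Qed.

End HA.

Section K4.
Context {A : K4iAlgebra}.
Implicit Types a b c x y e f q : A.

Lemma box_mono x y : hle A x y -> hle A (box A x) (box A y).
Proof. unfold hle; intro h. rewrite <- box_meet, h. reflexivity. Qed.

Lemma E_box e f x y : hle A e (box A f) -> E f x y -> E e (box A x) (box A y).
Proof. intros h [h1 h2]; split.
 - eapply le_trans. apply (le_meet_mono_l (box A x) _ _ h). rewrite <- box_meet. apply box_mono, h1.
 - eapply le_trans. apply (le_meet_mono_l (box A y) _ _ h). rewrite <- box_meet. apply box_mono, h2.
Qed.

Lemma lob c z : is_GLi A -> hle A c (box A c) -> hle A (meet A c (box A z)) z -> hle A c z.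
Proof. intros GL h1 h2. assert (h3 : hle A c (imp A (box A z) z)) by (apply res1; exact h2).
  assert (h4 : hle A c (box A z)).
  { eapply le_trans; [exact h1|]. rewrite <- (GL z). apply box_mono, h3. }
  eapply le_trans; [|exact h2]. apply le_glb; [apply le_refl|exact h4]. Qed.

Fixpoint hv (t : hpoly A) : bool :=
  match t with
  | PVar => true
  | PConst _ | PBot | PTop => false
  | PMeet t1 t2 | PJoin t1 t2 | PImp t1 t2 => hv t1 || hv t2
  | PBox t1 => hv t1
  end.

Fixpoint nb (t : hpoly A) : nat :=
  match t with
  | PVar => 0
  | PConst _ | PBot | PTop => 0
  | PMeet t1 t2 | PJoin t1 t2 | PImp t1 t2 => nb t1 + nb t2
  | PBox t1 => if hv t1 then 1 else 0
  end.

Fixpoint rep (q : A) (t : hpoly A) : hpoly A :=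
  match t with
  | PMeet t1 t2 => if Nat.eqb (nb t1) 0 then PMeet t1 (rep q t2) else PMeet (rep q t1) t2
  | PJoin t1 t2 => if Nat.eqb (nb t1) 0 then PJoin t1 (rep q t2) else PJoin (rep q t1) t2
  | PImp t1 t2 => if Nat.eqb (nb t1) 0 then PImp t1 (rep q t2) else PImp (rep q t1) t2
  | PBox t1 => if hv t1 then PConst q else PBox t1
  | t => t
  end.

Fixpoint sel (t : hpoly A) : hpoly A :=
  match t with
  | PMeet t1 t2 | PJoin t1 t2 | PImp t1 t2 => if Nat.eqb (nb t1) 0 then sel t2 else sel t1
  | PBox t1 => t1
  | _ => PVar
  end.

Lemma cong_gen (t : hpoly A) e a b : hle A e (box A e) -> E e a b ->
  E e (peval A t a) (peval A t b).
Proof. intros h1 h2. induction t; simpl; try apply E_refl; try assumption.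
 - apply E_meet; assumption.
 - apply E_join; assumption.
 - apply E_imp; assumption.
 - eapply E_box; eassumption. Qed.

Lemma noVar (t : hpoly A) a b : hv t = false -> peval A t a = peval A t b.
Proof. induction t; simpl; intro hh; try reflexivity; try discriminate;
  try (apply orb_false_iff in hh; destruct hh; f_equal; auto). f_equal; auto. Qed.

Lemma cong_guard (t : hpoly A) e a b : guarded t -> hle A e (box A e) ->
  hle A e (box A (biimp a b)) -> E e (peval A t a) (peval A t b).
Proof. intros g h1 h2. induction t; simpl in *; try apply E_refl; try contradiction;
  try (destruct g; first [apply E_meet|apply E_join|apply E_imp]; auto; fail).
  set (f := meet A e (biimp a b)).
  apply (E_box e f).
  - unfold f. rewrite box_meet. apply le_glb; assumption.
  - apply cong_gen.
    + unfold f. rewrite box_meet. apply le_glb.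
      * eapply le_trans; [apply le_meet_l|exact h1].
      * eapply le_trans; [apply le_meet_l|exact h2].
    + apply E_biimp. apply le_meet_r.
Qed.

Lemma cong_rep (t : hpoly A) e a b q q' : guarded t -> hle A e (box A e) ->
  hle A e (box A (biimp a b)) -> E e q q' ->
  E e (peval A (rep q t) a) (peval A (rep q' t) b).
Proof. intros g h1 h2 h3. induction t; simpl in *; try apply E_refl; try contradiction;
  try (destruct g; destruct (Nat.eqb (nb t1) 0); simpl;
       first [apply E_meet|apply E_join|apply E_imp]; auto; apply cong_guard; auto; fail).
  destruct (hv t); simpl. exact h3. apply (cong_guard (PBox t)); simpl; auto.
Qed.


Lemma rep_nb (t : hpoly A) q n : nb t = S n -> nb (rep q t) = n.
Proof. revert n; induction t; simpl; intros n hn; try discriminate;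
  try (destruct (Nat.eqb (nb t1) 0) eqn:Ez; simpl;
    [apply PeanoNat.Nat.eqb_eq in Ez; rewrite Ez in *; simpl in *; apply IHt2; lia
    |apply PeanoNat.Nat.eqb_neq in Ez; destruct (nb t1) as [|m] eqn:Em; [lia|];
     rewrite (IHt1 m eq_refl); lia]).
  destruct (hv t); simpl; [injection hn; intros; subst; reflexivity|discriminate]. Qed.

Lemma rep_guard (t : hpoly A) q : guarded t -> guarded (rep q t).
Proof. induction t; simpl; intro g; auto;
  try (destruct g; destruct (Nat.eqb (nb t1) 0); simpl; auto).
  destruct (hv t); simpl; auto. Qed.

Lemma rep_eval (t : hpoly A) h : nb t <> 0 ->
  peval A t h = peval A (rep (box A (peval A (sel t) h)) t) h.
Proof. induction t; simpl; intro hn; try lia;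
  try (destruct (Nat.eqb (nb t1) 0) eqn:Ez; simpl;
    [apply PeanoNat.Nat.eqb_eq in Ez; rewrite <- IHt2; [reflexivity|lia]
    |apply PeanoNat.Nat.eqb_neq in Ez; rewrite <- IHt1; [reflexivity|lia]]).
  destruct (hv t); simpl; [reflexivity|lia]. Qed.

Lemma nb0 (t : hpoly A) a b : guarded t -> nb t = 0 -> peval A t a = peval A t b.
Proof. induction t; simpl; intros g hn; try reflexivity; try contradiction;
  try (destruct g; f_equal; [apply IHt1|apply IHt2]; auto; lia).
  f_equal. apply noVar. destruct (hv t); [discriminate|reflexivity]. Qed.

Lemma exist_fp (GL : is_GLi A) n : forall t : hpoly A, guarded t -> nb t = n ->
  exists h, peval A t h = h.
Proof. induction n as [|n IH]; intros t g hn.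
 - exists (peval A t (top A)). apply nb0; assumption.
 - set (s := sel t).
   destruct (IH (rep (top A) t) (rep_guard _ _ g) (rep_nb _ _ _ hn)) as [a0 Ha0].
   set (Ab := box A (peval A s a0)).
   destruct (IH (rep Ab t) (rep_guard _ _ g) (rep_nb _ _ _ hn)) as [a1 Ha1].
   exists a1. rewrite (rep_eval t a1) by lia. fold s.
   assert (hA : hle A Ab (box A Ab)) by apply box_4.
   assert (Hz : hle A Ab (biimp a1 a0)).
   { apply lob; [exact GL|exact hA|].
     set (e := meet A Ab (box A (biimp a1 a0))).
     apply (proj1 (E_biimp e a1 a0)).
     assert (Ec := cong_rep t e a1 a0 Ab (top A) g).
     rewrite Ha1, Ha0 in Ec. apply Ec.
     - unfold e. rewrite box_meet. apply le_glb.
       + eapply le_trans; [apply le_meet_l|exact hA].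
       + eapply le_trans; [apply le_meet_r|apply box_4].
     - apply le_meet_r.
     - split. apply le_top. rewrite top_greatest. apply le_meet_l. }
   apply E_biimp in Hz.
   assert (Es := cong_gen s Ab a1 a0 hA Hz).
   assert (E1 := E_box Ab Ab _ _ hA Es). fold Ab in E1.
   assert (E2 := E_box (box A Ab) Ab _ _ (le_refl _) Es). fold Ab in E2.
   assert (Hbox : box A (peval A s a1) = Ab).
   { apply le_antisym.
     - apply lob; [exact GL|apply box_4|]. rewrite meetC. apply E2.
     - destruct E1 as [_ E1a]. eapply le_trans; [|exact E1a]. apply le_glb; apply le_refl. }
   rewrite Hbox. exact Ha1.
Qed.

End K4.

Theorem theorem3p5 (A : K4iAlgebra) :
  is_GLi A <->
  (forall t : hpoly A, guarded t -> exists h : A, peval A t h = h).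
Proof.
  split.
  - intros GL t g. eapply exist_fp; eauto.
  - intros FP a.
    destruct (FP (PImp (PBox PVar) (PConst a)) (conj I I)) as [h Hh]. simpl in Hh.
    apply le_antisym.
    + assert (h1 : hle A (box A h) (box A a)).
      { assert (hb : box A h = box A (meet A h (box A h))).
        { rewrite box_meet. symmetry. apply box_4. }
        rewrite hb. apply box_mono. rewrite <- Hh at 1. rewrite meetC. apply mp. }
      assert (h2 : hle A (imp A (box A a) a) h).
      { rewrite <- Hh. apply res1. eapply le_trans; [|apply (mp (box A a) a)].
        rewrite meetC. apply le_meet_mono_l. exact h1. }
      eapply le_trans; [apply box_mono, h2|exact h1].
    + apply box_mono. apply res1. apply le_meet_l.
Qed.
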